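(* Let $n$ be a positive integer, $G=\mathbb{Z}\times\mathbb{Z}_n=\langle z\rangle\times\langle a\rangle$, and let $\mathcal{S}$ be a Schur ring over $G$ such that $\mathbb{Z}^{(n)}=\langle z^n\rangle$ is an $\mathcal{S}$-subgroup. Let $C$ be an $\mathcal{S}$-subset. Then $C$ is an $\mathcal{S}$-class if and only if $C^{(k)}$ is an $\mathcal{S}$-class for all integers $k$ with $\gcd(k,n)=1$.
   Context: $F$ is a field of characteristic $0$; $\mathbb{Z}=\langle z\rangle$ is infinite cyclic and $\mathbb{Z}_n=\langle a\rangle$ is cyclic of order $n$, written multiplicatively. For finite $C\subseteq G$, $\overline{C}=\sum_{g\in C}g\in F[G]$ and $C^*=\{g^{-1}:g\in C\}$. A Schur ring over $G$ is a subspace $\mathcal{S}=\mathrm{Span}_F\{\overline{C}:C\in\mathcal{D}\}$ of $F[G]$, where $\mathcal{D}=\mathcal{D}(\mathcal{S})$ is a partition of $G$ into finite subsets with $\{1\}\in\mathcal{D}$, $C\in\mathcal{D}\Rightarrow C^*\in\mathcal{D}$, and each product $\overline{C}\,\overline{D}$ ($C,D\in\mathcal{D}$) a finite $F$-linear combination of the $\overline{E}$, $E\in\mathcal{D}$. Members of $\mathcal{D}(\mathcal{S})$ are $\mathcal{S}$-classes (primitive sets); an $\mathcal{S}$-subset is a union of $\mathcal{S}$-classes; an $\mathcal{S}$-subgroup is a subgroup which is an $\mathcal{S}$-subset. For a subset $C$ and integer $k$, $C^{(k)}=\{g^k:g\in C\}$. *)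

(* Defs.v *)
From HB Require Import structures.
From mathcomp Require Import all_boot all_algebra.
From mathcomp Require Import boolp classical_sets functions cardinality fsbigop.
Set Implicit Arguments. Unset Strict Implicit. Unset Printing Implicit Defensive.
Import GRing.Theory.
Local Open Scope classical_set_scope.
Local Open Scope ring_scope.

(* The group G = Z x Z_n is written ADDITIVELY as the zmodType  int * 'I_n
   (with n = m.+1 > 0); z = (1,0), a = (0,1). *)
Definition ZxZn (m : nat) := (int * 'I_m.+1)%type.

Section SchurRings.
Variables (F : fieldType) (G : zmodType).

(* An element of F[G] is viewed as its coefficient function G -> F. *)
Definition bar (C : set G) : G -> F := fun x => (x \in C)%:R.

(* product in F[G] of finitely supported coefficient functions *)
Definition conv (f g : G -> F) : G -> F :=
  fun x => \sum_(y \in [set y | f y != 0]) f y * g (x - y).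

Definition inv_set (C : set G) : set G := [set - x | x in C].

Definition pow_set (C : set G) (k : int) : set G := [set x *~ k | x in C].

Definition is_partition (D : set (set G)) : Prop :=
  [/\ (forall C, D C -> C !=set0),
      (forall C E, D C -> D E -> C = E \/ C `&` E = set0) &
      (forall x, exists C, D C /\ C x)].

(* D = D(S) for a Schur ring S = Span_F { \bar C : C in D } over G *)
Definition is_schur_partition (D : set (set G)) : Prop :=
  [/\ is_partition D,
      (forall C, D C -> finite_set C),
      D [set 0],
      (forall C, D C -> D (inv_set C)) &
      (forall C E, D C -> D E ->
         exists s : seq (set G * F),
           (forall p, p \in s -> D p.1) /\
           conv (bar C) (bar E) = (fun x => \sum_(p <- s) p.2 * bar p.1 x))].

Definition S_subset (D : set (set G)) (C : set G) : Prop :=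
  exists Ds : set (set G), Ds `<=` D /\ C = \bigcup_(E in Ds) E.

Definition is_subgroup (H : set G) : Prop :=
  H 0 /\ (forall x y, H x -> H y -> H (x - y)).

Definition S_subgroup (D : set (set G)) (H : set G) : Prop :=
  is_subgroup H /\ S_subset D H.

End SchurRings.

Definition Zn_sub (m : nat) : set (ZxZn m) :=
  [set x | exists k : int, x = ((m.+1)%:Z * k, 0)].
Arguments Zn_sub m : clear implicits.

(* Main.v *)
Require Import Defs.
From HB Require Import structures.
From mathcomp Require Import all_boot all_algebra.
From mathcomp Require Import boolp classical_sets functions cardinality fsbigop.
From mathcomp Require Import all_fingroup all_solvable.
From mathcomp Require Import finmap zify ring lra.
Set Implicit Arguments. Unset Strict Implicit. Unset Printing Implicit Defensive.
Import GRing.Theory Num.Theory.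

Local Open Scope ring_scope.
Section Count.
Variables (G : zmodType) (r : nat) (e : 'I_r -> G).

Definition Ncnt (j : nat) (x : G) : nat :=
  #|[set f : {ffun 'I_j -> 'I_r} | \sum_(l < j) e (f l) == x]|.

Lemma card_setE (T : finType) (P : pred T) : #|[set x | P x]| = (\sum_(x : T) (P x : nat))%N.
Proof. by rewrite -sum1_card big_mkcond /=; apply: eq_bigr => x _; rewrite inE; case: (P x). Qed.

Lemma Ncnt0 x : Ncnt 0 x = (x == 0 : nat).
Proof.
rewrite /Ncnt card_setE; under eq_bigr do rewrite big_ord0.
rewrite sum_nat_const card_ffun !card_ord expn0 mul1n eq_sym.
by case: (x == 0).
Qed.

Lemma NcntS j x : Ncnt j.+1 x = (\sum_(k < r) Ncnt j (x - e k))%N.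
Proof.
rewrite /Ncnt card_setE; under [RHS]eq_bigr do rewrite card_setE.
pose phi (u : 'I_r * {ffun 'I_j -> 'I_r}) : {ffun 'I_j.+1 -> 'I_r} :=
  [ffun l => if unlift ord0 l is Some l' then u.2 l' else u.1].
pose psi (f : {ffun 'I_j.+1 -> 'I_r}) := (f ord0, [ffun l' => f (lift ord0 l')]).
have phiK : cancel phi psi.
  move=> [k f']; rewrite /psi /phi ffunE unlift_none; congr pair.
  by apply/ffunP => l; rewrite !ffunE liftK.
have psiK : cancel psi phi.
  move=> f; apply/ffunP => l; rewrite /phi ffunE.
  by case: unliftP => [l' ->|->]; rewrite /psi ?ffunE.
rewrite (reindex phi) /=; last by exists psi => u _.
rewrite [RHS]pair_big /=; apply: eq_bigr => -[k f'] _ /=.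
rewrite big_ord_recl /phi ffunE unlift_none /=.
under eq_bigr do rewrite ffunE liftK /=.
by rewrite addrC [in RHS]eq_sym subr_eq eq_sym.
Qed.

Lemma iterS_val j (l : 'I_j) k : val (iter k (@ordS j) l) = ((l + k) %% j)%N.
Proof.
elim: k => [|k IH] /=; first by rewrite addn0 modn_small.
by rewrite IH addnS -addn1 modnDml addn1.
Qed.

Definition Kset (j : nat) (x : G) := [set k | e k *+ j == x].

Lemma Ncnt_mod (p j : nat) x : p.-nat j ->
  Ncnt j x = #|Kset j x| %[mod p].
Proof.
move=> pj; have j0 : (0 < j)%N by case/andP: pj.
pose T := {ffun 'I_j -> 'I_r}.
pose sg (f : T) : T := [ffun l => f (ordS l)].
have sg_inj : injective sg.
  move=> f g /ffunP E; apply/ffunP => l; have := E (ord_pred l).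
  by rewrite !ffunE ord_predK.
pose s := perm sg_inj.
have sE f : s f = sg f by rewrite permE.
have sX k f : (s ^+ k)%g f = [ffun l => f (iter k (@ordS j) l)].
  elim: k f => [|k IH] f; first by rewrite expg0 perm1; apply/ffunP => l; rewrite ffunE.
  rewrite expgSr permM IH sE; apply/ffunP => l; rewrite !ffunE -iterSr //.
have sj : (s ^+ j = 1)%g.
  apply/permP => f; rewrite sX perm1; apply/ffunP => l; rewrite ffunE; congr (f _).
  by apply: val_inj; rewrite iterS_val modnDr modn_small.
have pA : (p.-group <[s]>)%g.
  by rewrite /pgroup -orderE (pnat_dvd _ pj) // order_dvdn sj.
pose S := [set f : T | \sum_(l < j) e (f l) == x].
have actA : [acts <[s]>%g, on S | 'P].
  rewrite cycle_subG; apply/astabsP => f; have -> : 'P%act f s = s f by []; rewrite sE !inE.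
  congr (_ == x); rewrite [RHS](reindex_inj (@ordS_inj j)) /=.
  by apply: eq_bigr => l _; rewrite ffunE.
rewrite /Ncnt -/S (pgroup_fix_mod pA actA) afix_cycle.
pose o := Ordinal j0.
pose cf (k : 'I_r) : T := [ffun _ => k].
have cf_inj : injective cf by move=> k k' /ffunP/(_ o); rewrite !ffunE.
rewrite -(card_imset _ cf_inj); congr (_ %% p)%N; apply: eq_card => f.
apply/setIP/imsetP => [[Sf /afix1P fixf]|[k]].
  change (s f = f) in fixf; rewrite sE in fixf.
  have fc k : f (iter k (@ordS j) o) = f o.
    elim: k => [//|k IH]; rewrite iterS.
    have := congr1 (fun g : T => g (iter k (@ordS j) o)) fixf.
    by rewrite /= ffunE => ->.
  have fE : f = cf (f o).
    apply/ffunP => l; rewrite ffunE -[l in f l](_ : iter l (@ordS j) o = l) ?fc //.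
    by apply: val_inj; rewrite iterS_val add0n modn_small.
  exists (f o) => //; rewrite inE.
  have fl l : f l = f o by rewrite [in LHS]fE ffunE.
  move: Sf; rewrite inE; under eq_bigr do rewrite fl.
  by rewrite sumr_const card_ord.
rewrite inE => /eqP ekx ->; split.
  by rewrite inE; under eq_bigr do rewrite ffunE; rewrite sumr_const card_ord ekx.
by apply/afix1P; have -> : 'P%act (cf k) s = s (cf k) by []; rewrite sE; apply/ffunP => l; rewrite !ffunE.
Qed.

End Count.

Local Open Scope classical_set_scope.

Section Gen.
Variables (F : fieldType) (G : zmodType).
Hypothesis hF : [pchar F] =i pred0.
Variable D : set (set G).
Hypothesis hD : is_schur_partition F D.

Lemma natF_eq0 n : (n%:R == 0 :> F) = (n == 0)%N.
Proof. by move/pcharf0P: hF => ->. Qed.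

Lemma natF_le a b : (a%:R = b%:R :> F) -> (a <= b)%N.
Proof.
move=> E; case: (leqP a b) => // lt.
have : ((a - b)%:R == 0 :> F) by rewrite natrB ?E ?subrr // ltnW.
by rewrite natF_eq0 subn_eq0 leqNgt lt.
Qed.

Lemma natF_inj a b : (a%:R = b%:R :> F) -> a = b.
Proof. by move=> E; apply/eqP; rewrite eqn_leq !natF_le. Qed.

Definition sameclass (x y : G) := exists E, D E /\ E x /\ E y.

Definition inS (f : G -> F) := exists s : seq (set G * F),
  (forall p, p \in s -> D p.1) /\ f = (fun x => \sum_(p <- s) p.2 * bar F p.1 x).

Lemma cls_eq C E x : D C -> D E -> C x -> E x -> C = E.
Proof.
case: hD => [[_ hdisj _] _ _ _ _] DC DE Cx Ex.
case: (hdisj C E DC DE) => // CE.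
have : (C `&` E) x by []. by rewrite CE.
Qed.

Lemma cls_ex x : exists E, D E /\ E x.
Proof. by case: hD => [[_ _ hcov] _ _ _ _]; apply: hcov. Qed.

Lemma cls_fin C : D C -> finite_set C.
Proof. by case: hD => [_ hfin _ _ _]; apply: hfin. Qed.

Lemma cls_ne C : D C -> exists x, C x.
Proof. by case: hD => [[hne _ _] _ _ _ _] /hne [x Cx]; exists x. Qed.

Lemma cls_trans C x y : D C -> C x -> sameclass x y -> C y.
Proof. by move=> DC Cx [E [DE [Ex Ey]]]; rewrite (cls_eq DC DE Cx Ex). Qed.

Lemma sameclass_sym x y : sameclass x y -> sameclass y x.
Proof. by case=> E [DE [Ex Ey]]; exists E. Qed.

Lemma subset_cls X x y : S_subset D X -> X x -> sameclass x y -> X y.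
Proof.
case=> Ds [sD ->] [E DsE Ex] sxy.
by exists E => //; apply: (cls_trans (sD _ DsE)) Ex sxy.
Qed.

Lemma inS_const f C x y : inS f -> D C -> C x -> C y -> f x = f y.
Proof.
case=> s [sD ->] DC Cx Cy /=; apply: eq_big_seq => p ps; congr (_ * _).
have Dp := sD p ps.
case: hD => [[_ hdisj _] _ _ _ _]; rewrite /bar.
case: (hdisj _ _ DC Dp) => [<-|CE]; first by rewrite !mem_set.
have nP z : C z -> ~ p.1 z by move=> Cz pz; have : (C `&` p.1) z by []; rewrite CE.
by rewrite !memNset //; apply: nP.
Qed.

Lemma conv_barE C (f : G -> F) x : finite_set C ->
  conv (bar F C) f x = \sum_(y <- fset_set C) f (x - y).
Proof.
move=> finC; rewrite /conv.
have -> : [set y | bar F C y != 0] = C.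
  apply/seteqP; split => y /=; rewrite /bar.
  - by case: (boolP (y \in C)) => [/set_mem//|]; rewrite eqxx.
  - by move=> Cy; rewrite mem_set // oner_neq0.
rewrite fsbig_finite //; apply: eq_big_seq => y; rewrite in_fset_set // => /set_mem Cy.
by rewrite /bar mem_set // mul1r.
Qed.

Lemma inS0 : inS (fun _ => 0).
Proof. by exists [::]; split => //; apply: funext => x; rewrite big_nil. Qed.

Lemma inS_comb c f g : inS f -> inS g -> inS (fun x => c * f x + g x).
Proof.
case=> s [sD ->] [t [tD ->]]; exists ([seq (q.1, c * q.2) | q <- s] ++ t); split.
- move=> q; rewrite mem_cat => /orP[/mapP[q' q's ->]|/tD//]; exact: (sD _ q's).
- apply: funext => x /=; rewrite big_cat big_map /= mulr_sumr; congr (_ + _).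
  by apply: eq_bigr => q _; rewrite mulrA.
Qed.

Lemma inS_class C : D C -> inS (bar F C).
Proof.
move=> DC; exists [:: (C, 1)]; split; first by move=> q; rewrite inE => /eqP ->.
by apply: funext => x; rewrite big_seq1 mul1r.
Qed.

Lemma inS_conv C f : D C -> inS f -> inS (conv (bar F C) f).
Proof.
move=> DC [s [sD ->]]; have finC := cls_fin DC.
elim: s sD => [|q s IH] sD.
  suff -> : conv (bar F C) (fun x => \sum_(p <- [::]) p.2 * bar F p.1 x) = fun _ => 0.
    exact: inS0.
  by apply: funext => x; rewrite conv_barE //; apply: big1 => y _; rewrite big_nil.
have -> : conv (bar F C) (fun x => \sum_(p <- q :: s) p.2 * bar F p.1 x) =
  fun x => q.2 * conv (bar F C) (bar F q.1) x +
           conv (bar F C) (fun x => \sum_(p <- s) p.2 * bar F p.1 x) x.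
  apply: funext => x; rewrite !conv_barE // mulr_sumr -big_split /=.
  by apply: eq_bigr => y _; rewrite big_cons.
apply: inS_comb; last by apply: IH => p ps; apply: sD; rewrite inE ps orbT.
have Dq : D q.1 by apply: sD; rewrite inE eqxx.
case: hD => [_ _ _ _ hprod]; case: (hprod _ _ DC Dq) => t [tD ->].
by exists t.
Qed.

Fixpoint Pit (C : set G) (j : nat) : G -> F :=
  if j is j'.+1 then conv (bar F C) (Pit C j') else bar F [set 0].

Lemma inS_Pit C j : D C -> inS (Pit C j).
Proof.
move=> DC; elim: j => [|j IH] /=; last exact: inS_conv.
by apply: inS_class; case: hD.
Qed.

Definition enumC (C : set G) (k : 'I_(size (fset_set C))) : G := nth 0 (fset_set C : seq G) k.

Lemma Pit_cnt C j x : finite_set C -> Pit C j x = (Ncnt (@enumC C) j x)%:R.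
Proof.
move=> finC; elim: j x => [|j IH] x /=.
  rewrite Ncnt0 /bar; suff -> : (x \in [set 0]) = (x == 0) by [].
  by apply/idP/idP => [/set_mem ->|/eqP ->]; [rewrite eqxx | rewrite mem_set].
rewrite conv_barE // NcntS natr_sum (big_nth 0) big_mkord.
by apply: eq_bigr => k _; rewrite IH.
Qed.

Lemma enumC_in C k : finite_set C -> C (@enumC C k).
Proof.
move=> finC; apply: set_mem; rewrite -(in_fset_set finC); exact: mem_nth.
Qed.

Lemma enumC_inj C : injective (@enumC C).
Proof.
move=> k k' E; apply: val_inj; apply/eqP; rewrite -(nth_uniq 0 (ltn_ord k) (ltn_ord k')) ?fset_uniq //.
by apply/eqP.
Qed.

Lemma enumC_onto C x : finite_set C -> C x -> exists k, x = @enumC C k.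
Proof.
move=> finC Cx; have xin : x \in (fset_set C : seq G) by rewrite in_fset_set // mem_set.
have kl : (index x (fset_set C : seq G) < size (fset_set C))%N by rewrite index_mem.
by exists (Ordinal kl); rewrite /enumC nth_index.
Qed.

Lemma FL C (p N : nat) g g' : D C -> prime p -> p.-nat N ->
  {in C &, injective (fun x => x *+ N)} ->
  (exists2 w, C w & g = w *+ N) -> sameclass g g' -> exists2 w, C w & g' = w *+ N.
Proof.
move=> DC pp pN injN [w Cw ->] [E [DE [Eg Eg']]].
have finC := cls_fin DC.
have PE : Pit C N (w *+ N) = Pit C N g' by apply: (inS_const (inS_Pit N DC) DE Eg Eg').
rewrite !Pit_cnt // in PE; have NE := natF_inj PE.
have m1 := Ncnt_mod (@enumC C) (w *+ N) pN.
have m2 := Ncnt_mod (@enumC C) g' pN.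
have [k0 wk0] := enumC_onto finC Cw.
have K1 : #|Kset (@enumC C) N (w *+ N)| = 1%N.
  rewrite -(cards1 k0); apply: eq_card => k; rewrite !inE.
  apply/eqP/eqP => [E1|->]; last by rewrite -wk0.
  apply: enumC_inj; rewrite -wk0; apply: injN => //; apply: mem_set => //.
  exact: enumC_in.
have h : (#|Kset (@enumC C) N g'| %% p = 1 %% p)%N by rewrite -m2 -NE m1 K1.
have : (0 < #|Kset (@enumC C) N g'|)%N.
  rewrite lt0n; apply/negP => /eqP c0; move: h; rewrite c0 mod0n modn_small //.
  exact: prime_gt1.
case/card_gt0P => k; rewrite inE => /eqP <-.
by exists (enumC k) => //; exact: enumC_in.
Qed.

Lemma conv_bar_cnt (A B : set G) (x : G) : finite_set A ->
  conv (bar F A) (bar F B) x = (\sum_(y <- fset_set A) nat_of_bool ((x - y)%R \in B))%:R.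
Proof. by move=> finA; rewrite conv_barE // natr_sum. Qed.

Lemma conv_bar_neq0 (A B : set G) (x : G) : finite_set A ->
  conv (bar F A) (bar F B) x != 0 <-> exists y, A y /\ B (x - y).
Proof.
move=> finA; rewrite conv_bar_cnt // natF_eq0; split.
  move=> nz; apply: contrapT => nex; apply: (negP nz); apply/eqP; apply: big1_seq => y.
  rewrite in_fset_set // => /set_mem Ay; case: (boolP (x - y \in B)) => // /set_mem By.
  by case: nex; exists y.
by case=> y [Ay By]; rewrite (bigD1_seq y) ?fset_uniq ?in_fset_set ?mem_set //=.
Qed.

End Gen.

Lemma bnd0 (L a b : int) : 0 < L -> L * b = a -> -L < a -> a < L -> b = 0.
Proof. move=> *; nia. Qed.

Lemma int_key (L M : nat) (t0 tw tc tz : int) : (2 * M < L)%N ->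
  (`|t0| <= M)%N -> (`|tw| <= M)%N -> (`|tc| <= M)%N ->
  (`|tz| = `|t0| * L.-1)%N -> tc = tw * L%:Z - tz -> tc = tw.
Proof.
move=> hL h0 hw hc hz E.
pose u := t0 * (L.-1)%:Z.
have hu : `|tz|%N = `|u|%N by rewrite /u abszM absz_nat.
have L1 : (L.-1)%:Z = L%:Z - 1 by rewrite -subn1 -natz natrB ?natz //; lia.
have [s1|s2] : tz = u \/ tz = - u by lia.
- have : L%:Z * (tw - t0) = tc - t0 by rewrite E s1 /u L1; ring.
  move/bnd0 => b0; have : tw - t0 = 0 by apply: b0; lia.
  move=> ?; lia.
- have : L%:Z * (tw + t0) = tc + t0 by rewrite E s2 /u L1; ring.
  move/bnd0 => b0; have : tw + t0 = 0 by apply: b0; lia.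
  move=> ?; lia.
Qed.

Section Conc.
Variable m : nat.
Local Notation n := m.+1.
Local Notation G := (ZxZn m).

Lemma pairMn (x : G) (N : nat) : x *+ N = (x.1 *+ N, x.2 *+ N).
Proof. by rewrite -(raddfMn (@fst _ _)) -(raddfMn (@snd _ _)); case: (x *+ N). Qed.

Lemma Zn_mod (a : 'I_n) (k : nat) : a *+ k = a *+ (k %% n)%N.
Proof. by apply: val_inj; rewrite !Zp_mulrn /= modnMmr. Qed.

Lemma Zn_zero (a : 'I_n) (k : nat) : (n %| k)%N -> a *+ k = 0.
Proof. by move=> dk; rewrite Zn_mod (eqP dk) mulr0n. Qed.

Lemma Zn_one (a : 'I_n) (L : nat) : L = 1 %[mod n] -> a *+ L = a.
Proof. by move=> E; rewrite Zn_mod E -Zn_mod mulr1n. Qed.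

Lemma Zn_inj (N : nat) : coprime N n -> injective (fun a : 'I_n => a *+ N).
Proof.
move=> co a b /= /eqP; rewrite -subr_eq0 -mulrnBl => /eqP h.
have [u _ hu] := Bezoutr N (ltn0Sn m).
rewrite (eqP co) in hu.
have : (a - b) *+ (1 + u * N) = 0 by apply: Zn_zero.
by rewrite mulrnDr mulr1n mulnC mulrnA h mul0rn addr0 => /eqP; rewrite subr_eq0 => /eqP.
Qed.

Lemma G_inj (N : nat) : (0 < N)%N -> coprime N n -> injective (fun x : G => x *+ N).
Proof.
move=> N0 co x y /=; rewrite !pairMn => E.
have E1 : x.1 *+ N = y.1 *+ N := congr1 fst E.
have E2 : x.2 *+ N = y.2 *+ N := congr1 snd E.
have h1 : x.1 = y.1.
  move: E1; rewrite -[x.1 *+ N]mulr_natr -[y.1 *+ N]mulr_natr => /mulIf; apply.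
  by rewrite pnatr_eq0 -lt0n.
have h2 : x.2 = y.2 by apply: (Zn_inj co).
by case: x y h1 h2 {E E1 E2} => ? ? [? ?] /= -> ->.
Qed.

Lemma period_ex (p : nat) : (0 < p)%N -> coprime p n -> exists2 d, (0 < d)%N & p ^ d = 1 %[mod n].
Proof.
move=> p0 co.
pose f (i : 'I_m.+2) : 'I_n := Ordinal (ltn_pmod (p ^ i) (ltn0Sn m)).
have : ~~ injectiveb f.
  by apply/negP => /injectiveP /leq_card; rewrite !card_ord ltnn.
case/injectivePn => i [i' ne E].
have {}E : p ^ i = p ^ i' %[mod n] by move/(congr1 val): E.
wlog lt : i i' ne E / (i < i')%N.
  move=> W; case: (ltngtP i i') => [lt|lt|eq]; first exact: (W i i').
  - by apply: (W i' i) => //; rewrite eq_sym.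
  - by move/val_inj: eq ne => ->; rewrite eqxx.
exists (i' - i)%N; first by rewrite subn_gt0.
have le : (p ^ i <= p ^ i')%N by rewrite leq_pexp2l // ltnW.
have : (n %| p ^ i * (p ^ (i' - i) - 1))%N.
  rewrite mulnBr muln1 -expnD subnKC ?(ltnW lt) //.
  by rewrite -eqn_mod_dvd // E.
rewrite Gauss_dvdr; last by rewrite coprime_sym coprimeXl.
move=> dv; apply/eqP; rewrite eqn_mod_dvd ?expn_gt0 ?p0 //.
Qed.

End Conc.

Section Main.
Variables (F : fieldType) (hF : [pchar F] =i pred0) (m : nat).
Local Notation n := m.+1.
Local Notation G := (ZxZn m).
Variables (D : set (set G)) (hD : is_schur_partition F D)
  (hZ : S_subgroup D (Zn_sub m)).

Lemma H_sub x y : Zn_sub m x -> sameclass D x y -> Zn_sub m y.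
Proof. by move=> Hx sxy; apply: (subset_cls hD hZ.2 Hx sxy). Qed.

Lemma H_dvd x y : Zn_sub m x -> sameclass D x y -> (`|x.1| %| `|y.1|)%N.
Proof.
move=> Hx sxy; have Hy := H_sub Hx sxy.
case: Hx => s xE; case: Hy => s' yE.
rewrite xE yE /= !abszM; apply: dvdn_mul => //.
case: (eqVneq s 0) => [s0|sn0].
  have x0 : x = 0 by rewrite xE s0 mulr0.
  have D0 : D [set 0] by case: hD.
  have : [set 0] y by apply: (cls_trans hD D0) sxy; rewrite x0.
  move=> y0; move: yE; rewrite y0 => /(congr1 fst) /= /esym /eqP.
  by rewrite mulf_eq0 => /orP[//|/eqP ->]; rewrite s0.
apply/dvdn_partP; first by rewrite absz_gt0.
move=> q; rewrite mem_primes => /and3P [pq _ qs].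
set Q := partn (absz s) q.
have Qs : (Q %| `|s|)%N by apply: dvdn_part.
have Q0 : (0 < Q)%N by apply: part_gt0.
have [s0 s0E] : exists s0, s = s0 * Q%:Z.
  by exists (s %/ Q%:Z)%Z; rewrite divzK // dvdzE absz_nat.
pose y0 : G := (n%:Z * s0, 0).
have Hy0 : Zn_sub m y0 by exists s0.
have [E0 [DE0 E0y0]] := cls_ex hD y0.
have E0H z : E0 z -> Zn_sub m z.
  by move=> Ez; apply: (H_sub Hy0); exists E0.
have qQ : q.-nat Q by rewrite /Q p_part pnatX pnat_id.
have inj : {in E0 &, injective (fun z => z *+ Q)}.
  move=> z z' /set_mem /E0H [k ->] /set_mem /E0H [k' ->]; rewrite !pairMn => E.
  have E1 : (n%:Z * k) *+ Q = (n%:Z * k') *+ Q := congr1 fst E.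
  move: E1; rewrite -[(n%:Z * k) *+ Q]mulr_natr -[(n%:Z * k') *+ Q]mulr_natr => /mulIf -> //.
  by rewrite pnatr_eq0 -lt0n.
have gx : x = y0 *+ Q.
  rewrite xE pairMn mul0rn; congr pair.
  by rewrite -mulr_natr natz s0E mulrA.
have [w /E0H [k wE] yw] := FL hF hD DE0 pq qQ inj (ex_intro2 _ _ y0 E0y0 gx) sxy.
move: yw; rewrite yE wE pairMn => /(congr1 fst) /= E1.
have : s' = k * Q%:Z.
  apply: (mulfI (_ : n%:Z != 0)) => //; rewrite E1 -mulr_natr natz mulrA //.
by move=> ->; rewrite abszM absz_nat dvdn_mull.
Qed.

Lemma H_cls x y : Zn_sub m x -> sameclass D x y -> y.2 = 0 /\ `|y.1|%N = `|x.1|%N.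
Proof.
move=> Hx sxy; have Hy := H_sub Hx sxy; split; first by case: Hy => k ->.
apply/eqP; rewrite eqn_dvd H_dvd // (H_dvd Hy) //; exact: sameclass_sym.
Qed.


Lemma fin_bound (C : set G) : finite_set C -> exists M, forall c, C c -> (`|c.1| <= M)%N.
Proof.
move=> finC; exists (\max_(y <- fset_set C) `|y.1|%N)%N => c Cc.
have cin : c \in (fset_set C : seq _) by rewrite in_fset_set ?mem_set.
by have := @leq_bigmax_seq _ (fset_set C : seq _) xpredT (fun y : G => `|y.1|%N) c cin isT.
Qed.

Lemma key C p x0 c : D C -> C x0 -> C c -> prime p -> coprime p n ->
  sameclass D (x0 *+ p) (c *+ p).
Proof.
move=> DC Cx0 Cc pp co.
have finC := cls_fin hD DC.
have [M hM] := fin_bound finC.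
have p0 : (0 < p)%N := prime_gt0 pp.
have [d d0 hd] := period_ex p0 co.
pose J := (d * (2 * M).+1)%N.
have J0 : (0 < J)%N by rewrite muln_gt0 d0.
pose L := (p ^ J)%N.
have L1 : L = 1 %[mod n] by rewrite /L expnM -modnXm hd modnXm exp1n.
have L0 : (0 < L)%N by rewrite expn_gt0 p0.
have LM : (2 * M < L)%N.
  have h1 : (J < L)%N by apply: ltn_expl; exact: prime_gt1.
  have h2 : ((2 * M).+1 <= J)%N by rewrite /J leq_pmull.
  lia.
have Ldv : (n %| L.-1)%N by rewrite -subn1 -eqn_mod_dvd // L1.
have injp : {in C &, injective (fun x : G => x *+ p)}.
  by move=> ? ? _ _; apply: G_inj.
have [E [DE Ex]] := cls_ex hD (x0 *+ p).
have [E' [DE' E'x]] := cls_ex hD (x0 *+ L).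
pose J1 := J.-1.
have LE : L = (p * (p ^ J1)%N)%N by rewrite /L -expnS prednK.
have E'E y : E' y -> exists2 w, C w /\ E (w *+ p) & y = w *+ L.
  move=> E'y.
  have [e Ee ->] : exists2 e, E e & y = e *+ (p ^ J1)%N.
    have pN : p.-nat ((p ^ J1)%N) by rewrite pnatX pnat_id.
    have injN : {in E &, injective (fun x : G => x *+ ((p ^ J1)%N))}.
      by move=> ? ? _ _; apply: G_inj; [rewrite expn_gt0 p0 | apply: coprimeXl].
    apply: (FL hF hD DE pp pN injN (g := x0 *+ L)); last by exists E'.
    by exists (x0 *+ p) => //; rewrite -mulrnA -LE.
  have [w Cw ew] : exists2 w, C w & e = w *+ p.
    apply: (FL hF hD DC pp (pnat_id pp) injp (g := x0 *+ p)); first by exists x0.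
    by exists E.
  by exists w; [split => //; rewrite -ew | rewrite ew -mulrnA -LE].
pose h := x0 *+ L.-1.
have Hh : Zn_sub m h.
  rewrite /h pairMn; exists (x0.1 * (L.-1 %/ n)%:Z); rewrite Zn_zero //; congr pair.
  rewrite -mulr_natr natz -{1}(divnK Ldv) PoszM.
  ring.
have [Hc [DHc Hch]] := cls_ex hD h.
have DHs : D (inv_set Hc) by case: hD => [_ _ _ hinv _]; apply: hinv.
pose Phi := conv (bar F E') (bar F (inv_set Hc)).
have inSPhi : inS D Phi.
  by case: hD => [_ _ _ _ hprod]; case: (hprod _ _ DE' DHs) => s [sD sE]; exists s.
have finE' := cls_fin hD DE'.
have Phi0 : Phi x0 != 0.
  apply/(conv_bar_neq0 hF (inv_set Hc) x0 finE'); exists (x0 *+ L); split => //.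
  by exists h => //; rewrite /h -{2}(prednK L0) mulrS opprD addrA subrr add0r.
have Phic : Phi c != 0 by rewrite -(inS_const hD inSPhi DC Cx0 Cc).
case/(conv_bar_neq0 hF _ _ finE'): Phic => y [E'y [z Hcz zE]].
have [zh2 zh1] := H_cls Hh (ex_intro _ Hc (conj DHc (conj Hch Hcz))).
have [w [Cw Ewp] yE] := E'E y E'y.
have cE : c = y - z by rewrite zE addrC subrK.
have cw : c = w.
  have c1 : c.1 = w.1.
    apply: (int_key LM (hM _ Cx0) (hM _ Cw) (hM _ Cc) (tz := z.1)).
    - by rewrite zh1 /h pairMn /= -mulr_natr abszM natz absz_nat.
    - by rewrite cE yE raddfB /= pairMn /= -mulr_natr natz.
  have c2 : c.2 = w.2.
    by rewrite cE yE raddfB /= pairMn /= zh2 subr0 Zn_one.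
  exact: injective_projections c1 c2.
by exists E; split => //; split => //; rewrite cw.
Qed.


Lemma pow_prime C p : D C -> prime p -> coprime p n -> D (pow_set C p).
Proof.
move=> DC pp co; have [x0 Cx0] := cls_ne hD DC.
have [E [DE Ex]] := cls_ex hD (x0 *+ p).
suff -> : pow_set C p = E by [].
apply/seteqP; split => z.
- case=> c Cc <-; change (E (c *+ p)).
  have [E2 [DE2 [E2a E2b]]] := key DC Cx0 Cc pp co.
  by rewrite (cls_eq hD DE DE2 Ex E2a).
- move=> Ez.
  have injp : {in C &, injective (fun x : G => x *+ p)}.
    by move=> ? ? _ _; apply: G_inj => //; exact: prime_gt0.
  have [w Cw ->] := FL hF hD DC pp (pnat_id pp) injp (ex_intro2 _ _ x0 Cx0 erefl)
    (ex_intro _ E (conj DE (conj Ex Ez))).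
  by exists w.
Qed.

Lemma pow_pos C (k : nat) : D C -> coprime k n -> (0 < k)%N -> D (pow_set C k).
Proof.
elim: k {-2}k (leqnn k) C => [|b IH] k kb C DC co k0.
  by move: k0; rewrite leqn0 in kb; rewrite (eqP kb).
case: (ltngtP k 1) => [lt1|k1|->]; first by move: lt1; rewrite ltnNge k0.
- pose p := pdiv k.
  have pp : prime p by apply: pdiv_prime.
  have pk : (p %| k)%N by apply: pdiv_dvd.
  have kE : k = (p * (k %/ p))%N by rewrite mulnC divnK.
  have k1' : (0 < k %/ p)%N by rewrite divn_gt0 ?prime_gt0 // dvdn_leq.
  have ltk : (k %/ p < k)%N by rewrite ltn_Pdiv // prime_gt1.
  have cop : coprime p n by apply: coprime_dvdl pk co.
  have cok : coprime (k %/ p) n by apply: coprime_dvdl co; apply: dvdn_div.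
  have -> : pow_set C k = pow_set (pow_set C p) (k %/ p)%N.
    apply/seteqP; split => z.
    - case=> c Cc <-; exists (c *+ p); first by exists c.
      by change (c *+ p *+ (k %/ p) = c *+ k); rewrite -mulrnA -kE.
    - case=> y [c Cc <-] <-; exists c => //.
      by change (c *+ k = c *+ p *+ (k %/ p)); rewrite -mulrnA -kE.
  apply: IH => //; first by rewrite -ltnS (leq_trans ltk).
  exact: pow_prime.
- suff -> : pow_set C 1 = C by [].
  apply/seteqP; split => z; first by case=> c Cc <-; rewrite mulr1z.
  by move=> Cz; exists z => //; rewrite mulr1z.
Qed.

End Main.

Theorem theorem3p1 (F : fieldType) (hF : [pchar F] =i pred0) (m : nat)
  (D : set (set (ZxZn m))) (hD : is_schur_partition F D)
  (hZ : S_subgroup D (Zn_sub m))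
  (C : set (ZxZn m)) (hC : S_subset D C) :
  D C <-> (forall k : int, coprime `|k|%N m.+1 -> D (pow_set C k)).
Proof.
split=> [DC k|H]; last first.
  have := H 1 (coprime1n _).
  suff -> : pow_set C 1 = C by [].
  apply/seteqP; split => z; first by case=> c Cc <-; rewrite mulr1z.
  by move=> Cz; exists z => //; rewrite mulr1z.
case: k => [j|j] /= co.
- case: j co => [|j] co.
  + have n1 : m.+1 = 1%N by move: co; rewrite /coprime gcd0n => /eqP.
    have [x0 Cx0] := cls_ne hD DC.
    suff -> : pow_set C 0 = [set 0] by case: hD.
    apply/seteqP; split => z; first by case=> c Cc <-; rewrite mulr0z.
    by move=> /= ->; exists x0 => //; rewrite mulr0z.
  + exact: (pow_pos hF hD hZ DC co).
- have DP := pow_pos hF hD hZ DC co (ltn0Sn j).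
  have -> : pow_set C (Negz j) = inv_set (pow_set C j.+1).
    apply/seteqP; split => z.
    + by case=> c Cc <-; exists (c *+ j.+1) => //; exists c.
    + by case=> y [c Cc <-] <-; exists c.
  by case: hD => [_ _ _ hinv _]; apply: hinv.
Qed.
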